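(* Let $\Delta$ be a regular simplex and $X$ a compact metric space. Then (1) $d_{\mathrm{GH}}(X,\Delta)\le 2\,\widehat{d}_{\mathrm{GH}}(X,\Delta)$, and this bound is tight: for every $c<2$ there exist a compact metric space $X$ and a regular simplex $\Delta$ with $d_{\mathrm{GH}}(X,\Delta)>c\,\widehat{d}_{\mathrm{GH}}(X,\Delta)$; (2) $d_{\mathrm{GH}}(X,\Delta)=\widehat{d}_{\mathrm{GH}}(X,\Delta)$ whenever $|X|<|\Delta|$, or $|X|=|\Delta|<\infty$, or $\operatorname{diam}(\Delta)\le\frac12\operatorname{diam}(X)$.
   Context: A regular simplex is a metric space all of whose distances between distinct points are equal (here finite, so compact). $\operatorname{diam}(X)=\sup_{x,x'}d_X(x,x')$ and $|X|$ is the cardinality. For a map $f:X\to Y$, $\operatorname{dis}(f)=\sup_{x,x'\in X}|d_X(x,x')-d_Y(f(x),f(x'))|$; for $f:X\to Y$, $g:Y\to X$, $\operatorname{codis}(f,g)=\sup_{x\in X,y\in Y}|d_X(x,g(y))-d_Y(f(x),y)|$. $d_{\mathrm{GH}}$ is the Gromov--Hausdorff distance between compact metric spaces (infimum over metric spaces $Z$ and isometric embeddings of $X,Y$ into $Z$ of the Hausdorff distance of the images), equivalently $d_{\mathrm{GH}}(X,Y)=\frac12\inf_{f,g}\max\{\operatorname{dis}(f),\operatorname{dis}(g),\operatorname{codis}(f,g)\}$. The modified Gromov--Hausdorff distance is $\widehat{d}_{\mathrm{GH}}(X,Y)=\frac12\max\{\inf_{f:X\to Y}\operatorname{dis}(f),\inf_{g:Y\to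 X}\operatorname{dis}(g)\}$. *)

(* Defs.v *)
From HB Require Import structures.
From mathcomp Require Import all_boot all_order all_algebra.
From mathcomp Require Import boolp classical_sets cardinality reals ereal.
Set Implicit Arguments. Unset Strict Implicit. Unset Printing Implicit Defensive.
Import Order.TTheory GRing.Theory Num.Theory.
Local Open Scope classical_set_scope.
Local Open Scope ring_scope.

Record metric (R : realType) (T : Type) := Metric {
  dist :> T -> T -> R;
  dist_eq0 : forall x y, dist x y = 0 <-> x = y;
  dist_sym : forall x y, dist x y = dist y x;
  dist_tri : forall x y z, dist x z <= dist x y + dist y z;
}.

Section Defs.
Variable R : realType.
Local Open Scope ereal_scope.

Definition mopen T (d : metric R T) (U : set T) :=
  forall x, U x -> exists2 e : R, (0 < e)%R & forall y, (d x y < e)%R -> U y.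

Definition compact_metric T (d : metric R T) :=
  forall (I : Type) (U : I -> set T),
    (forall i, mopen d (U i)) -> (forall x, exists i, U i x) ->
    exists (n : nat) (k : 'I_n -> I), forall x, exists j, U (k j) x.

Definition regular_simplex T (d : metric R T) :=
  exists a : R, forall x y, x <> y -> d x y = a.

Definition diam T (d : metric R T) : \bar R :=
  ereal_sup [set (d x y)%:E | x in [set: T] & y in [set: T]].

Definition dis T S (dT : metric R T) (dS : metric R S) (f : T -> S) : \bar R :=
  ereal_sup [set (`|dT x x' - dS (f x) (f x')|)%:E | x in [set: T] & x' in [set: T]].

Definition codis T S (dT : metric R T) (dS : metric R S) (f : T -> S) (g : S -> T)
  : \bar R :=
  ereal_sup [set (`|dT x (g y) - dS (f x) y|)%:E | x in [set: T] & y in [set: S]].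

(* Gromov--Hausdorff distance via the distortion/codistortion formula *)
Definition dGH T S (dT : metric R T) (dS : metric R S) : \bar R :=
  (2^-1)%:E * ereal_inf [set maxe (maxe (dis dT dS fg.1) (dis dS dT fg.2))
                                  (codis dT dS fg.1 fg.2)
                        | fg in [set: (T -> S) * (S -> T)]].

Definition mdGH T S (dT : metric R T) (dS : metric R S) : \bar R :=
  (2^-1)%:E * maxe (ereal_inf [set dis dT dS f | f in [set: T -> S]])
                   (ereal_inf [set dis dS dT g | g in [set: S -> T]]).
End Defs.

(* Main.v *)
Require Import Defs.
From HB Require Import structures.
From mathcomp Require Import all_boot all_order all_algebra.
From mathcomp Require Import boolp classical_sets cardinality reals ereal.
From mathcomp Require Import lra ring.
Import Order.TTheory GRing.Theory Num.Theory.
Set Implicit Arguments. Unset Strict Implicit. Unset Printing Implicit Defensive.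
Local Open Scope classical_set_scope.
Local Open Scope ring_scope.

Section Helpers.
Variable R : realType.

Lemma dist_ge0 T (d : metric R T) x y : 0 <= d x y.
Proof.
have := dist_tri d x y x; rewrite (dist_sym d y x).
have -> : d x x = 0 by apply/dist_eq0.
lra.
Qed.

Lemma dist_xx T (d : metric R T) x : d x x = 0.
Proof. by apply/dist_eq0. Qed.

Lemma disP T S (dT : metric R T) (dS : metric R S) f (δ : R) :
  (dis dT dS f <= δ%:E)%E -> forall x x', `|dT x x' - dS (f x) (f x')| <= δ.
Proof.
move=> H x x'; rewrite -lee_fin; apply: le_trans H.
by apply: ereal_sup_ubound; exists x => //; exists x'.
Qed.

Lemma disB T S (dT : metric R T) (dS : metric R S) f (δ : R) :
  (forall x x', `|dT x x' - dS (f x) (f x')| <= δ) -> (dis dT dS f <= δ%:E)%E.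
Proof.
by move=> H; apply: ge_ereal_sup => _ [x _ [x' _ <-]]; rewrite lee_fin.
Qed.

Lemma codisB T S (dT : metric R T) (dS : metric R S) f g (δ : R) :
  (forall x y, `|dT x (g y) - dS (f x) y| <= δ) -> (codis dT dS f g <= δ%:E)%E.
Proof.
by move=> H; apply: ge_ereal_sup => _ [x _ [x' _ <-]]; rewrite lee_fin.
Qed.

Lemma dis_ge0 T S (dT : metric R T) (dS : metric R S) f :
  inhabited T -> (0 <= dis dT dS f)%E.
Proof.
case=> x; apply: le_trans (ereal_sup_ubound _); last first.
  by exists x => //; exists x.
by rewrite !dist_xx subrr normr0.
Qed.


Lemma key T S (dT : metric R T) (dS : metric R S) (f : T -> S) (x0 : T) (a δ : R) :
  (forall p q : S, p <> q -> dS p q = a) -> (dis dT dS f <= δ%:E)%E ->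
  (forall s, (exists x, f x = s) \/ a <= δ) ->
  exists g, (dis dS dT g <= δ%:E)%E /\ (codis dT dS f g <= δ%:E)%E.
Proof.
move=> Ha Hf Hs.
have dP := disP Hf.
have d0 : 0 <= δ by have := dP x0 x0; rewrite !dist_xx subrr normr0.
pose g s := match pselect (exists x, f x = s) with
            | left H => proj1_sig (cid H) | right _ => x0 end.
have gP s : f (g s) = s \/ ((forall x, f x <> s) /\ g s = x0 /\ a <= δ).
  rewrite /g; case: pselect => [H|H]; first by left; exact: proj2_sig (cid H).
  right; split; first by move=> x fx; apply: H; exists x.
  by split => //; case: (Hs s) => // -[x fx]; exfalso; apply: H; exists x.
have cod y s : `|dT y (g s) - dS (f y) s| <= δ.
  case: (gP s) => [E|[ns [-> ad]]]; first by rewrite -{2}E; exact: dP.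
  have fa : dS (f y) s = a by apply: Ha; exact: ns.
  have a0 : 0 <= a by rewrite -fa; apply: dist_ge0.
  have h1 := dP y x0; have h2 := dist_ge0 dT y x0.
  have h3 : dS (f y) (f x0) <= a.
    by have [->|ne] := pselect (f y = f x0); [rewrite dist_xx | rewrite Ha].
  rewrite fa ler_norml; move: h1; rewrite ler_norml => /andP[h4 h5].
  apply/andP; split; lra.
exists g; split; last exact: codisB.
apply: disB => s s'.
case: (gP s) => [E|[ns [E1 ad]]].
  by rewrite distrC -{2}E; apply: cod.
case: (gP s') => [E|[ns' [E2 ad']]].
  by rewrite distrC (dist_sym dT) (dist_sym dS) -{2}E; apply: cod.
rewrite E1 E2 dist_xx.
have [->|ne] := pselect (s = s'); first by rewrite dist_xx subrr normr0.
by rewrite Ha // subr0 ger0_norm // -(Ha _ _ ne) dist_ge0.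
Qed.

Lemma invcase T S (dT : metric R T) (dS : metric R S) (g : S -> T) (h : T -> S) (δ : R) :
  cancel g h -> cancel h g -> (dis dS dT g <= δ%:E)%E ->
  (dis dT dS h <= δ%:E)%E /\ (codis dT dS h g <= δ%:E)%E.
Proof.
move=> gK hK Hg; have dP := disP Hg; split.
  by apply: disB => x x'; rewrite -{1}(hK x) -{1}(hK x') distrC; exact: dP.
apply: codisB => x s; rewrite -{1}(hK x) distrC; exact: dP.
Qed.


Definition Jv T S (dT : metric R T) (dS : metric R S) :=
  ereal_inf [set maxe (maxe (dis dT dS fg.1) (dis dS dT fg.2)) (codis dT dS fg.1 fg.2)
            | fg in [set: (T -> S) * (S -> T)]].
Definition I1 T S (dT : metric R T) (dS : metric R S) :=
  ereal_inf [set dis dT dS f | f in [set: T -> S]].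

Lemma dGHE T S (dT : metric R T) (dS : metric R S) :
  dGH dT dS = ((2^-1)%:E * Jv dT dS)%E.
Proof. by []. Qed.
Lemma mdGHE T S (dT : metric R T) (dS : metric R S) :
  mdGH dT dS = ((2^-1)%:E * maxe (I1 dT dS) (I1 dS dT))%E.
Proof. by []. Qed.

Lemma Jv_le T S (dT : metric R T) (dS : metric R S) f g (δ : R) :
  (dis dT dS f <= δ%:E)%E -> (dis dS dT g <= δ%:E)%E -> (codis dT dS f g <= δ%:E)%E ->
  (Jv dT dS <= δ%:E)%E.
Proof.
move=> h1 h2 h3; apply: le_trans (ereal_inf_lbound _) _; first by exists (f, g).
by rewrite /= !ge_max h1 h2 h3.
Qed.

Lemma I1_ge0 T S (dT : metric R T) (dS : metric R S) : inhabited T -> (0 <= I1 dT dS)%E.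
Proof. by move=> iT; apply: le_ereal_inf_tmp => _ [f _ <-]; apply: dis_ge0. Qed.

Lemma I1_lt T S (dT : metric R T) (dS : metric R S) (δ : R) :
  (I1 dT dS < δ%:E)%E -> exists f, (dis dT dS f <= δ%:E)%E.
Proof. by move/ereal_inf_lt => [_ [f _ <-] /ltW]; exists f. Qed.

Lemma Mv_le_Jv T S (dT : metric R T) (dS : metric R S) :
  (maxe (I1 dT dS) (I1 dS dT) <= Jv dT dS)%E.
Proof.
apply: le_ereal_inf_tmp => _ [[f g] _ <-] /=.
rewrite ge_max; apply/andP; split; rewrite !le_max.
  by rewrite ereal_inf_lbound //; exists f.
by apply/orP; left; apply/orP; right; rewrite ereal_inf_lbound //; exists g.
Qed.

Lemma red (A B J : \bar R) (k : R) : 0 < k -> (0 <= A)%E ->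
  (forall δ : R, (A < δ%:E)%E -> (B < δ%:E)%E -> (J <= (k * δ)%:E)%E) ->
  (J <= k%:E * maxe A B)%E.
Proof.
move=> k0 A0 H.
have AM : (A <= maxe A B)%E by rewrite le_max lexx.
have BM : (B <= maxe A B)%E by rewrite le_max lexx orbT.
move: AM BM; case: (maxe A B) => [m| |] AM BM.
- apply/lee_addgt0Pr => e e0; rewrite -EFinM -EFinD.
  have -> : k * m + e = k * (m + e / k) by field; rewrite gt_eqF.
  apply: H; [apply: le_lt_trans AM _ | apply: le_lt_trans BM _];
    by rewrite lte_fin ltrDl divr_gt0.
- rewrite mulry gtr0_sg // mul1e; exact: leey.
- by exfalso; move: (le_trans A0 AM); rewrite leeNy_eq.
Qed.


Lemma not_inj_ex (A B : Type) (h : A -> B) :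
  ~ injective h -> exists s s', h s = h s' /\ s <> s'.
Proof.
move=> nI; apply: contrapT => nE; apply: nI => s s' E.
by apply: contrapT => ne; apply: nE; exists s, s'.
Qed.

Lemma noninj_a T S (dT : metric R T) (dS : metric R S) (g : S -> T) (a δ : R) :
  (forall p q : S, p <> q -> dS p q = a) -> (dis dS dT g <= δ%:E)%E ->
  ~ injective g -> a <= δ.
Proof.
move=> Ha Hg nI; have [s [s' [E ne]]] := not_inj_ex nI.
have := disP Hg s s'; rewrite E dist_xx subr0 Ha //.
exact: le_trans (ler_norm _).
Qed.

Lemma card_eq_injF T U (A : set U) :
  ([set: T] #= A)%card -> exists F : T -> U, injective F /\ forall t, A (F t).
Proof.
move/card_bijP => [f [h fK hK]].
exists (fun t => val (f (SigSub (mem_set (I : [set: T] t))))); split.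
  move=> t t' /val_inj E; have := congr1 h E; rewrite !fK.
  by move/(congr1 val).
by move=> t; apply: set_mem; exact: valP.
Qed.

Lemma part1 T (dT : metric R T) (S : finType) (dS : metric R S) :
  inhabited T -> inhabited S -> regular_simplex dS ->
  (dGH dT dS <= 2%:E * mdGH dT dS)%E.
Proof.
move=> iT _ [a Ha]; case: (iT) => x0.
rewrite dGHE mdGHE.
have HJ : (Jv dT dS <= 2%:E * maxe (I1 dT dS) (I1 dS dT))%E.
  apply: red => //; first exact: I1_ge0.
  move=> δ /I1_lt [f Hf] /I1_lt [g Hg].
  have d0 : 0 <= δ by rewrite -lee_fin; apply: le_trans Hf; apply: dis_ge0.
  have d2 : (δ%:E <= (2 * δ)%:E)%E by rewrite lee_fin; lra.
  have Hs : forall s, (exists x, f x = s) \/ a <= 2 * δ.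
    have [surj|nsurj] := pselect (forall s, exists x, f x = s); first by left.
    move=> s; right.
    have nI : ~ injective (f \o g).
      move=> /injF_bij [h hK Kh]; apply: nsurj => s1; exists (g (h s1)); exact: Kh.
    have [s1 [s2 [E ne]]] := not_inj_ex nI.
    have h1 := disP Hg s1 s2; have h2 := disP Hf (g s1) (g s2).
    move: E h1 h2 => /= ->; rewrite dist_xx subr0 Ha // => h1 h2.
    have := ler_norm (dT (g s1) (g s2)); move: h1 h2.
    rewrite !ler_norml => /andP[h1 h1'] /andP[h2 h2'] h3; lra.
  have [g' [Hg' Hc]] := key x0 Ha (le_trans Hf d2) Hs.
  exact: (Jv_le (le_trans Hf d2) Hg' Hc).
have -> : (2%:E * ((2^-1)%:E * maxe (I1 dT dS) (I1 dS dT)) =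
          maxe (I1 dT dS) (I1 dS dT))%E.
  by rewrite muleA -EFinM divff ?mul1e // pnatr_eq0.
apply: le_trans (lee_wpmul2l _ HJ) _; first by rewrite lee_fin.
by rewrite muleA -EFinM mulVf ?mul1e // pnatr_eq0.
Qed.


Lemma part2 T (dT : metric R T) (S : finType) (dS : metric R S) :
  inhabited T -> inhabited S -> regular_simplex dS ->
  ((exists n : nat, (n < #|S|)%N /\ ([set: T] #= `I_n)%card)
      \/ ([set: T] #= [set: S])%card
      \/ (diam dS <= (2^-1)%:E * diam dT)%E) ->
  dGH dT dS = mdGH dT dS.
Proof.
move=> iT _ [a Ha] cond; case: (iT) => x0.
rewrite dGHE mdGHE; congr (_ * _)%E.
apply/le_anti; rewrite Mv_le_Jv andbT.
rewrite -[X in (_ <= X)%E]mul1e.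
apply: red => //; first exact: I1_ge0.
move=> δ /I1_lt [f Hf] /I1_lt [g Hg]; rewrite mul1r.
have viaKey : a <= δ -> (Jv dT dS <= δ%:E)%E.
  move=> ad; have [g' [Hg' Hc]] := key x0 Ha Hf (fun s => or_intror ad).
  exact: Jv_le Hf Hg' Hc.
have viaSurj : (forall s, exists x, f x = s) -> (Jv dT dS <= δ%:E)%E.
  move=> su; have [g' [Hg' Hc]] := key x0 Ha Hf (fun s => or_introl (su s)).
  exact: Jv_le Hf Hg' Hc.
case: cond => [[n [ltn /card_eq_injF [F [Finj FI]]]] | [/card_eq_injF [F [Finj _]] | hd]].
- apply: viaKey; apply: (noninj_a Ha Hg) => ginj.
  have : (#|S| <= n)%N.
    pose phi (s : S) : 'I_n := Ordinal (FI (g s) : (F (g s) < n)%N).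
    rewrite -[n]card_ord; apply: (@leq_card _ _ phi) => s s' /(congr1 val) /=.
    by move/Finj/ginj.
  by rewrite leqNgt ltn.
- have [ginj|nginj] := pselect (injective g); last first.
    by apply: viaKey; exact: noninj_a Ha Hg nginj.
  have /injF_bij [k kK Kk] : injective (F \o g) by move=> s s' /Finj /ginj.
  pose h t := k (F t).
  have gK : cancel g h by move=> s; rewrite /h; exact: kK.
  have hK : cancel h g by move=> t; apply: Finj; rewrite /h; exact: Kk.
  have [Hh Hc] := invcase gK hK Hg.
  exact: Jv_le Hh Hg Hc.
- have [surj|nsurj] := pselect (forall s, exists x, f x = s); first exact: viaSurj.
  apply: viaKey.
  have [s ns] : exists s, forall x, f x <> s.
    apply: contrapT => H; apply: nsurj => s; apply: contrapT => H'.
    by apply: H; exists s => x fx; apply: H'; exists x.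
  have fa : dS (f x0) s = a by apply: Ha; exact: ns.
  have a0 : 0 <= a by rewrite -fa; exact: dist_ge0.
  have aS : (a%:E <= diam dS)%E.
    by apply: ereal_sup_ubound; exists (f x0) => //; exists s => //; rewrite fa.
  have dTle : (diam dT <= (a + δ)%:E)%E.
    apply: ge_ereal_sup => _ [x _ [y _ <-]]; rewrite lee_fin.
    have := disP Hf x y; rewrite ler_norml => /andP[_ h].
    have : dS (f x) (f y) <= a.
      by have [->|ne] := pselect (f x = f y); [rewrite dist_xx | rewrite Ha].
    lra.
  have : (a%:E <= (2^-1)%:E * (a + δ)%:E)%E.
    apply: le_trans aS (le_trans hd _); apply: lee_wpmul2l => //.
  rewrite -EFinM lee_fin; lra.
Qed.


Section Tight.
Variable n : nat.

Lemma tT0 (i j : 'I_n.+2) : `|(i%:R : R) - j%:R| = 0 <-> i = j.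
Proof.
split=> [/eqP|->]; last by rewrite subrr normr0.
by rewrite normr_eq0 subr_eq0 eqr_nat => /eqP /ord_inj.
Qed.
Lemma tT1 (i j : 'I_n.+2) : `|(i%:R : R) - j%:R| = `|(j%:R : R) - i%:R|.
Proof. exact: distrC. Qed.
Lemma tT2 (i j k : 'I_n.+2) :
  `|(i%:R : R) - k%:R| <= `|(i%:R : R) - j%:R| + `|(j%:R : R) - k%:R|.
Proof. exact: ler_distD. Qed.

Definition tT : metric R 'I_n.+2 := @Defs.Metric R _ _ tT0 tT1 tT2.

Definition dSt (p q : bool) : R := if p == q then 0 else 2 * n.+1%:R.
Lemma Npos : 0 < (n.+1%:R : R). Proof. by rewrite ltr0n. Qed.
Lemma tS0 p q : dSt p q = 0 <-> p = q.
Proof.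
have := Npos; rewrite /dSt; case: p; case: q => //= N0; split => //; lra.
Qed.
Lemma tS1 p q : dSt p q = dSt q p.
Proof. by rewrite /dSt; case: p; case: q. Qed.
Lemma tS2 p q r : dSt p r <= dSt p q + dSt q r.
Proof. by have := Npos; rewrite /dSt; case: p; case: q; case: r => /= N0; lra. Qed.

Definition tS : metric R bool := @Defs.Metric R _ _ tS0 tS1 tS2.

Lemma tight_lower (f : 'I_n.+2 -> bool) g :
  (((2 * n.+1%:R - 1) : R)%:E <=
     maxe (maxe (dis tT tS f) (dis tS tT g)) (codis tT tS f g))%E.
Proof.
have N0 := Npos.
have [[i [lti ne]]|H] := pselect (exists i : nat, (i < n.+1)%N /\ f (inord i) != f (inord i.+1)).
  rewrite !le_max; apply/orP; left; apply/orP; left.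
  apply: le_trans (ereal_sup_ubound _); last first.
    by exists (inord i) => //; exists (inord i.+1).
  rewrite lee_fin /= /dSt (negbTE ne) !inordK // ?ltnS 1?ltnW //.
  have -> : `|(i%:R : R) - i.+1%:R| = 1 by rewrite -natr1 opprD addrA subrr sub0r normrN normr1.
  rewrite ler_normr; apply/orP; right.
  lra.
have C k : (k <= n.+1)%N -> f (inord k) = f (inord 0).
  elim: k => [//|k IH] lek.
  rewrite -IH ?(ltnW lek) //; apply/eqP; rewrite eq_sym; apply: contrapT => ne'.
  by apply: H; exists k; split => //; apply/negP.
have Cf t : f t = f (inord 0) by rewrite -(inord_val t) C // -ltnS.
rewrite !le_max; apply/orP; right.
apply: le_trans (ereal_sup_ubound _); last first.
  by exists (g (~~ f (inord 0))) => //; exists (~~ f (inord 0)).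
rewrite lee_fin /= /dSt Cf subrr normr0 sub0r normrN.
case: (f (inord 0)) => /=; rewrite ger0_norm; lra.
Qed.

Lemma tight_I1 : (I1 tT tS <= (n.+1%:R : R)%:E)%E.
Proof.
apply: le_trans (ereal_inf_lbound _) _; first by exists (fun=> true).
apply: disB => i j /=; rewrite /dSt eqxx subr0 normr_id.
have hi : (i%:R : R) <= n.+1%:R by rewrite ler_nat -ltnS.
have hj : (j%:R : R) <= n.+1%:R by rewrite ler_nat -ltnS.
have hi0 : (0 : R) <= i%:R by rewrite ler0n.
have hj0 : (0 : R) <= j%:R by rewrite ler0n.
rewrite ler_norml; apply/andP; split; lra.
Qed.

Lemma tight_I2 : (I1 tS tT <= (n.+1%:R : R)%:E)%E.
Proof.
apply: le_trans (ereal_inf_lbound _) _.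
  by exists (fun b : bool => if b then (ord0 : 'I_n.+2) else ord_max).
have N0 := Npos.
apply: disB => p q /=; rewrite /dSt.
case: p; case: q => /=; rewrite ?subrr ?normr0 ?sub0r ?subr0 ?normrN ?(gtr0_norm N0) ?(ltW N0) //; rewrite ger0_norm; lra.
Qed.

End Tight.


Lemma tight (c : R) : c < 2 ->
  exists (T : Type) (dT : metric R T) (S : finType) (dS : metric R S),
    [/\ compact_metric dT, inhabited T, inhabited S, regular_simplex dS
      & (c%:E * mdGH dT dS < dGH dT dS)%E].
Proof.
move=> c2; pose x := (2 - c)^-1.
have x0 : 0 <= x by rewrite /x invr_ge0; lra.
have xc : (2 - c) * x = 1 by rewrite /x divff //; apply/eqP => h; lra.
have := archi_boundP x0; set n := Num.Def.archi_bound x => hx.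
exists 'I_n.+2, (tT n), bool, (tS n); split.
- move=> I U _ cover; exists n.+2, (fun j => proj1_sig (cid (cover j))) => y.
  by exists y; exact: proj2_sig (cid (cover y)).
- by constructor; exact: ord0.
- by constructor; exact: true.
- by exists (2 * n.+1%:R) => p q; rewrite /= /dSt; case: eqP.
rewrite dGHE mdGHE.
have HJ : (((2 * n.+1%:R - 1) : R)%:E <= Jv (tT n) (tS n))%E.
  by apply: le_ereal_inf_tmp => _ [[f g] _ <-]; exact: tight_lower.
have HM0 : (0 <= maxe (I1 (tT n) (tS n)) (I1 (tS n) (tT n)))%E.
  have iT : inhabited 'I_n.+2 by constructor; exact: ord0.
  apply: le_trans (I1_ge0 (tT n) (tS n) iT) _.
  by rewrite le_max lexx.
have HMN : (maxe (I1 (tT n) (tS n)) (I1 (tS n) (tT n)) <= (n.+1%:R : R)%:E)%E.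
  by rewrite ge_max tight_I1 tight_I2.
move: HM0 HMN; case: (maxe _ _) => [m| |] //= m0 mN.
rewrite lee_fin in m0 mN.
apply: lt_le_trans (lee_wpmul2l _ HJ); last by rewrite lee_fin.
rewrite -!EFinM lte_fin.
have N0 : (0 : R) < n.+1%:R by rewrite ltr0n.

move: mN; rewrite lee_fin => mN.
clearbody x n.
have p1 : 0 < 2 - c by lra.
have p2 : 0 < n%:R + 1 - x by lra.
have hN : 1 < (2 - c) * n.+1%:R.
  have := mulr_gt0 p1 p2; rewrite -natr1 => h.
  have e : (2 - c) * (n%:R + 1 - x) = (2 - c) * (n%:R + 1) - (2 - c) * x by ring.
  lra.
have N1 : (1 : R) <= n.+1%:R by rewrite ler1n.
have [c0|c0] := lerP 0 c.
  have h : 0 <= c * (n.+1%:R - m) by apply: mulr_ge0 => //; rewrite subr_ge0.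
  have e : c * (n.+1%:R - m) = c * n.+1%:R - c * m by ring.
  have e2 : (2 - c) * n.+1%:R = 2 * n.+1%:R - c * n.+1%:R by ring.
  have e3 : c * (2^-1 * m) = 2^-1 * (c * m) by ring.
  rewrite e3; lra.
have := mulr_le0_ge0 (ltW c0) m0 => h.
have e3 : c * (2^-1 * m) = 2^-1 * (c * m) by ring.
rewrite e3; lra.
Qed.

End Helpers.

Theorem theorem3 (R : realType) :
  (* (1) the bound *)
  (forall (T : Type) (dT : metric R T) (S : finType) (dS : metric R S),
     compact_metric dT -> inhabited T -> inhabited S -> regular_simplex dS ->
     (dGH dT dS <= 2%:E * mdGH dT dS)%E)
  /\
  (* (1) tightness *)
  (forall c : R, c < 2 ->
     exists (T : Type) (dT : metric R T) (S : finType) (dS : metric R S),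
       [/\ compact_metric dT, inhabited T, inhabited S, regular_simplex dS
         & (c%:E * mdGH dT dS < dGH dT dS)%E])
  /\
  (* (2) equality cases *)
  (forall (T : Type) (dT : metric R T) (S : finType) (dS : metric R S),
     compact_metric dT -> inhabited T -> inhabited S -> regular_simplex dS ->
     ((exists n : nat, (n < #|S|)%N /\ ([set: T] #= `I_n)%card)
      \/ ([set: T] #= [set: S])%card
      \/ (diam dS <= (2^-1)%:E * diam dT)%E) ->
     dGH dT dS = mdGH dT dS).
Proof.
split; first by move=> T dT S dS _ iT iS rs; exact: part1.
split; first by move=> c c2; exact: tight.
by move=> T dT S dS _ iT iS rs cond; exact: part2.
Qed.
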